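(* Let $G$ be the infinite strong grid with vertex set $\mathbb{Z}^2$, where $(i_1,j_1)$ and $(i_2,j_2)$ are adjacent iff $\max\{|i_1-i_2|,|j_1-j_2|\}=1$. Let $L=\{k(2,1)+l(-1,3): k,l\in\mathbb{Z}\}$ and $L'=\{k(1,3)+l(2,-1): k,l\in\mathbb{Z}\}$ (both subgroups of $\mathbb{Z}^2$ of index $7$). Then: (1) if guards occupy exactly the vertices of a translate $p+L$ ($p\in\mathbb{Z}^2$), then for every vertex $v\in\mathbb{Z}^2$ there is a translate $q+L'$ with $v\in q+L'$ and a bijection $f:p+L\to q+L'$ such that for every $x\in p+L$ either $f(x)=x$ or $f(x)$ is adjacent to $x$; (2) symmetrically, if guards occupy exactly a translate $p'+L'$, then for every vertex $v$ there is a translate $q'+L$ containing $v$ and a bijection $f:p'+L'\to q'+L$ with each $f(x)$ equal or adjacent to $x$. Consequently, starting from guards on a translate of $L$ (one guard per vertex), the guards can respond to every infinite sequence of attacks in the all-guards-move eternal domination game on $G$, always keeping at most one guard per vertex, occupying each attacked vertex, and alternating between translates of $L$ and translates of $L'$ (each of which is a dominating set of $G$); i.e. they eternally dominate $G$.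
   Context: Eternal domination game (all-guards-move model): guards are placed on distinct vertices of a graph forming a dominating set; at each turn an attacker chooses a vertex, and then every guard may stay in place or move to an adjacent vertex, with no two guards ending on the same vertex, and some guard must end on the attacked vertex. The guards eternally dominate the graph if they can do so, maintaining a dominating set, against every infinite sequence of attacks. *)

(* Defs.v *)
From Stdlib Require Import ZArith Lia.
Open Scope Z_scope.

Definition vtx : Type := (Z * Z)%type.

Definition adj (u v : vtx) : Prop :=
  Z.max (Z.abs (fst u - fst v)) (Z.abs (snd u - snd v)) = 1.

Definition vset := vtx -> Prop.

Definition L : vset := fun x =>
  exists k l : Z, x = (2 * k - l, k + 3 * l).

Definition L' : vset := fun x =>
  exists k l : Z, x = (k + 2 * l, 3 * k - l).

Definition transl (S : vset) (p : vtx) : vset := fun x =>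
  S (fst x - fst p, snd x - snd p).

(* A legal all-guards move from configuration D to configuration D':
   a bijection f : D -> D' with each f(x) equal or adjacent to x. *)
Definition move (D D' : vset) : Prop :=
  exists f : vtx -> vtx,
    (forall x, D x -> D' (f x)) /\
    (forall x y, D x -> D y -> f x = f y -> x = y) /\
    (forall y, D' y -> exists x, D x /\ f x = y) /\
    (forall x, D x -> f x = x \/ adj x (f x)).

Definition dominating (D : vset) : Prop :=
  forall v, D v \/ exists u, D u /\ adj u v.

(* Guards on configuration D (one guard per vertex of D) eternally dominate
   the grid: D is dominating, and for every attacked vertex v there is a
   legal move to a configuration D' containing v from which the guards
   again eternally dominate (coinductively, i.e. against every infinite
   sequence of attacks). *)
CoInductive eternally_dominates (D : vset) : Prop :=
  ED : dominating D ->
       (forall v : vtx, exists D' : vset,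
           move D D' /\ D' v /\ eternally_dominates D') ->
       eternally_dominates D.

(* Main.v *)
Require Import Defs.
From Stdlib Require Import ZArith Lia.
Open Scope Z_scope.

Definition tb (e : Z) : Z * Z :=
  if e =? 0 then (0,0) else if e =? 1 then (-1,1) else if e =? 2 then (0,1)
  else if e =? 3 then (1,1) else if e =? 4 then (-1,-1) else if e =? 5 then (0,-1)
  else (1,-1).

Lemma mod_cases (z : Z) : z mod 7 = 0 \/ z mod 7 = 1 \/ z mod 7 = 2 \/ z mod 7 = 3
  \/ z mod 7 = 4 \/ z mod 7 = 5 \/ z mod 7 = 6.
Proof. pose proof (Z.mod_pos_bound z 7). lia. Qed.

Lemma L_iff p x : transl L p x <-> exists m, fst x - fst p - 2 * (snd x - snd p) = 7 * m.
Proof.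
  unfold transl, L; split.
  - intros [k [l H]]. destruct x, p; cbn [fst snd] in *. pose proof (f_equal fst H) as A; pose proof (f_equal snd H) as B; cbn [fst snd] in A, B. exists (-l). lia.
  - intros [m H]. exists (snd x - snd p + 3*m), (-m). f_equal; lia.
Qed.

Lemma L'_iff p x : transl L' p x <-> exists m, fst x - fst p + 2 * (snd x - snd p) = 7 * m.
Proof.
  unfold transl, L'; split.
  - intros [k [l H]]. destruct x, p; cbn [fst snd] in *. pose proof (f_equal fst H) as A; pose proof (f_equal snd H) as B; cbn [fst snd] in A, B. exists k. lia.
  - intros [m H]. exists m, (3*m - (snd x - snd p)). f_equal; lia.
Qed.

Definition f1 (d : Z) (x : vtx) : vtx :=
  let e := (d - fst x - 2 * snd x) mod 7 in (fst x + fst (tb e), snd x + snd (tb e)).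
Definition f2 (d : Z) (x : vtx) : vtx :=
  let e := (d - (fst x - 2 * snd x)) mod 7 in (fst x + fst (tb e), snd x - snd (tb e)).

Ltac mc z := pose proof (Z.div_mod z 7 ltac:(lia)); destruct (mod_cases z) as [?|[?|[?|[?|[?|[?|?]]]]]].

Ltac solve_ex := match goal with |- exists m, ?E = 7 * m => exists (E / 7);
  pose proof (Z.div_mod E 7 ltac:(lia)); pose proof (Z.mod_pos_bound E 7 ltac:(lia)) end.

Lemma moveLL' p q : move (transl L p) (transl L' q).
Proof.
  destruct p as [p1 p2], q as [q1 q2].
  exists (f1 (q1 + 2 * q2)). split; [|split; [|split]].
  - intros [x1 x2] Hx. apply L_iff in Hx. apply L'_iff. destruct Hx as [m Hm].
    unfold f1; cbn [fst snd] in *.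
    mc (q1 + 2 * q2 - x1 - 2 * x2);
    match goal with H : _ mod 7 = _ |- _ => rewrite H; cbv [tb Z.eqb Pos.eqb fst snd] end;
    pose proof (Z.div_mod (q1 + 2 * q2 - x1 - 2 * x2) 7);
    solve_ex; lia.
  - intros [x1 x2] [y1 y2] Hx Hy. apply L_iff in Hx, Hy.
    destruct Hx as [m Hm], Hy as [n Hn]. unfold f1; cbn [fst snd] in *.
    mc (q1 + 2 * q2 - x1 - 2 * x2);
    match goal with H : _ mod 7 = _ |- _ => rewrite H end;
    mc (q1 + 2 * q2 - y1 - 2 * y2);
    match goal with H : (_ - y1 - _) mod 7 = _ |- _ => rewrite H end;
    cbv [tb Z.eqb Pos.eqb fst snd];
    intro E; pose proof (f_equal fst E); pose proof (f_equal snd E); cbn [fst snd] in *;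
    f_equal; lia.
  - intros [y1 y2] Hy. apply L'_iff in Hy. destruct Hy as [m Hm]. cbn [fst snd] in *.
    mc (y1 - 2 * y2 - (p1 - 2 * p2));
    [ exists (y1, y2) | exists (y1 + 1, y2 + 1) | exists (y1, y2 + 1)
    | exists (y1 - 1, y2 + 1) | exists (y1 + 1, y2 - 1) | exists (y1, y2 - 1)
    | exists (y1 - 1, y2 - 1) ]; split;
    try (apply L_iff; cbn [fst snd];
      solve_ex;
      pose proof (Z.div_mod (y1 - 2 * y2 - (p1 - 2 * p2)) 7); lia);
    unfold f1; cbn [fst snd];
    match goal with |- context [?z mod 7] =>
      mc z; match goal with H : z mod 7 = _ |- _ => rewrite H end end;
    cbv [tb Z.eqb Pos.eqb fst snd];
    f_equal; lia.
  - intros [x1 x2] _. unfold f1, adj; cbn [fst snd].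
    mc (q1 + 2 * q2 - x1 - 2 * x2);
    match goal with H : _ mod 7 = _ |- _ => rewrite H end;
    cbv [tb Z.eqb Pos.eqb fst snd];
    first [left; f_equal; lia | right; lia].
Qed.

Lemma moveL'L p q : move (transl L' p) (transl L q).
Proof.
  destruct p as [p1 p2], q as [q1 q2].
  exists (f2 (q1 - 2 * q2)). split; [|split; [|split]].
  - intros [x1 x2] Hx. apply L'_iff in Hx. apply L_iff. destruct Hx as [m Hm].
    unfold f2; cbn [fst snd] in *.
    mc (q1 - 2 * q2 - (x1 - 2 * x2));
    match goal with H : _ mod 7 = _ |- _ => rewrite H; cbv [tb Z.eqb Pos.eqb fst snd] end;
    pose proof (Z.div_mod (q1 - 2 * q2 - (x1 - 2 * x2)) 7);
    solve_ex; lia.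
  - intros [x1 x2] [y1 y2] Hx Hy. apply L'_iff in Hx, Hy.
    destruct Hx as [m Hm], Hy as [n Hn]. unfold f2; cbn [fst snd] in *.
    mc (q1 - 2 * q2 - (x1 - 2 * x2));
    match goal with H : _ mod 7 = _ |- _ => rewrite H end;
    mc (q1 - 2 * q2 - (y1 - 2 * y2));
    match goal with H : (_ - (y1 - _)) mod 7 = _ |- _ => rewrite H end;
    cbv [tb Z.eqb Pos.eqb fst snd];
    intro E; pose proof (f_equal fst E); pose proof (f_equal snd E); cbn [fst snd] in *;
    f_equal; lia.
  - intros [y1 y2] Hy. apply L_iff in Hy. destruct Hy as [m Hm]. cbn [fst snd] in *.
    mc (y1 + 2 * y2 - (p1 + 2 * p2));
    [ exists (y1, y2) | exists (y1 + 1, y2 - 1) | exists (y1, y2 - 1)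
    | exists (y1 - 1, y2 - 1) | exists (y1 + 1, y2 + 1) | exists (y1, y2 + 1)
    | exists (y1 - 1, y2 + 1) ]; split;
    try (apply L'_iff; cbn [fst snd];
      solve_ex;
      pose proof (Z.div_mod (y1 + 2 * y2 - (p1 + 2 * p2)) 7); lia);
    unfold f2; cbn [fst snd];
    match goal with |- context [?z mod 7] =>
      mc z; match goal with H : z mod 7 = _ |- _ => rewrite H end end;
    cbv [tb Z.eqb Pos.eqb fst snd];
    f_equal; lia.
  - intros [x1 x2] _. unfold f2, adj; cbn [fst snd].
    mc (q1 - 2 * q2 - (x1 - 2 * x2));
    match goal with H : _ mod 7 = _ |- _ => rewrite H end;
    cbv [tb Z.eqb Pos.eqb fst snd];
    first [left; f_equal; lia | right; lia].
Qed.

Lemma adj_sym u v : adj u v -> adj v u.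
Proof. unfold adj. destruct u, v; cbn [fst snd]. lia. Qed.

Lemma dom_of D : (forall v, exists D0, D0 v /\ move D0 D) -> dominating D.
Proof.
  intros H v. destruct (H v) as [D0 [Hv [f [H1 [_ [_ H4]]]]]].
  destruct (H4 v Hv) as [E|E].
  - left. rewrite <- E. auto.
  - right. exists (f v). split; auto. apply adj_sym; auto.
Qed.

Lemma ed_both : forall (b : bool) p,
  eternally_dominates (if b then transl L p else transl L' p).
Proof.
  cofix CH. intros b p. constructor.
  - apply dom_of. intro v. destruct b.
    + exists (transl L' v). split; [ apply L'_iff; exists 0; lia | apply moveL'L ].
    + exists (transl L v). split; [ apply L_iff; exists 0; lia | apply moveLL' ].
  - intro v. exists (if negb b then transl L v else transl L' v). split; [|split].
    + destruct b; cbn [negb]; [apply moveLL' | apply moveL'L].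
    + destruct b; cbn [negb]; [apply L'_iff | apply L_iff]; exists 0; lia.
    + exact (CH (negb b) v).
Qed.

Theorem mainTheorem1 :
  (forall p v : vtx, exists q : vtx,
      transl L' q v /\ move (transl L p) (transl L' q)) /\
  (forall p' v : vtx, exists q' : vtx,
      transl L q' v /\ move (transl L' p') (transl L q')) /\
  (forall p : vtx, eternally_dominates (transl L p)).
Proof.
  split; [|split].
  - intros p v. exists v. split; [apply L'_iff; exists 0; lia | apply moveLL'].
  - intros p v. exists v. split; [apply L_iff; exists 0; lia | apply moveL'L].
  - intro p. exact (ed_both true p).
Qed.
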